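(* Let $E$ be a graph, $X\subseteq {\rm Reg}(E)$, $Y={\rm Reg}(E)\setminus X$, and let $c=e_1e_2\cdots e_n$ be a cycle without exits based at a vertex $w$. Put $\mu_0=w$ and, for $1\le k<n$, $\mu_k=e_1\cdots e_k$, and let $I=\{0\}\cup\{k: 1\le k<n,\ s(e_k)\in Y\}$. Then $$wC_K^X(E)w=\Big\{\sum_{\substack{0\le i\le t_1,\ 0\le j\le t_2,\ k\in I}} l_{ijk}\, c^i\mu_k\mu_k^*(c^* )^j \ :\ l_{ijk}\in K,\ t_1,t_2\in\mathbb N\cup\{0\}\Big\},$$ where $c^0=(c^* )^0=w$.
   Context: Let $K$ be a field and $E=(E^0,E^1,r,s)$ a directed graph (vertices $E^0$, edges $E^1$, range and source maps $r,s:E^1\to E^0$; no countability or finiteness assumptions). A vertex $v$ is a sink if $s^{-1}(v)=\emptyset$ and regular if $s^{-1}(v)$ is finite and nonempty; ${\rm Reg}(E)$ is the set of regular vertices. A path of length $n\ge 1$ is a sequence $\xi_1\cdots\xi_n$ of edges with $r(\xi_i)=s(\xi_{i+1})$; vertices are paths of length $0$; ${\rm Path}(E)$ is the set of finite paths, with $s,r$ extended to paths in the obvious way. For $X\subseteq{\rm Reg}(E)$, the relative Cohn path algebra $C_K^X(E)$ is the free $K$-algebra generated by $E^0\cup E^1\cup\{e^*:e\in E^1\}$ subject to: $vw=\delta_{v,w}v$ ($v,w\in E^0$); $s(e)e=er(e)=e$ and $r(e)e^*=e^*s(e)=e^*$ ($e\in E^1$); $e^*f=\delta_{e,f}r(e)$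 ($e,f\in E^1$); $v=\sum_{e\in s^{-1}(v)}ee^*$ for every $v\in X$. For a path $\alpha=\alpha_1\cdots\alpha_n$, $\alpha^*=\alpha_n^*\cdots\alpha_1^*$, and $v^*=v$ for vertices. A closed path is a path $\alpha=e_1\cdots e_n$ ($n\ge1$) with $r(e_n)=s(e_1)$; it is a cycle if $s(e_i)\ne s(e_j)$ for $i\neq j$, and it is based at $s(e_1)$. An exit of a path $e_1\cdots e_n$ is an edge $e$ with $s(e)=s(e_i)$ for some $i$ and $e\ne e_i$. *)

(* Defs.v *)
From HB Require Import structures.
From mathcomp Require Import all_boot all_order all_algebra.
From Stdlib Require List.
Set Implicit Arguments. Unset Strict Implicit. Unset Printing Implicit Defensive.
Import GRing.Theory.
Local Open Scope ring_scope.

(* A directed graph: arbitrary vertex type V, edge type Ed, maps s r : Ed -> V.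
   No finiteness/countability assumptions. *)

Definition regular (V Ed : Type) (s : Ed -> V) (v : V) : Prop :=
  exists l : list Ed, List.NoDup l /\ l <> nil /\ (forall f, List.In f l <-> s f = v).

(* Terms of the free (non-unital, associative) K-algebra on the generators
   v (v in E^0), e (e in E^1), e^* (e in E^1). *)
Inductive term (K V Ed : Type) : Type :=
  | TV : V -> term K V Ed
  | TE : Ed -> term K V Ed
  | TS : Ed -> term K V Ed
  | T0 : term K V Ed
  | TAdd : term K V Ed -> term K V Ed -> term K V Ed
  | TMul : term K V Ed -> term K V Ed -> term K V Ed
  | TScale : K -> term K V Ed -> term K V Ed.

Arguments TV {K V Ed}. Arguments TE {K V Ed}. Arguments TS {K V Ed}.
Arguments T0 {K V Ed}.

Definition sumT (K V Ed : Type) (l : seq (term K V Ed)) : term K V Ed :=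
  foldr (@TAdd K V Ed) T0 l.

(* The quotient term/ceq is exactly C_K^X(E). *)
Inductive ceq (K : fieldType) (V Ed : Type) (s r : Ed -> V) (X : V -> Prop)
  : term K V Ed -> term K V Ed -> Prop :=
  | ceq_refl x : ceq s r X x x
  | ceq_sym x y : ceq s r X x y -> ceq s r X y x
  | ceq_trans x y z : ceq s r X x y -> ceq s r X y z -> ceq s r X x z
  | ceq_add x x' y y' : ceq s r X x x' -> ceq s r X y y' ->
      ceq s r X (TAdd x y) (TAdd x' y')
  | ceq_mul x x' y y' : ceq s r X x x' -> ceq s r X y y' ->
      ceq s r X (TMul x y) (TMul x' y')
  | ceq_scale a x x' : ceq s r X x x' -> ceq s r X (TScale a x) (TScale a x')
  | ceq_addA x y z : ceq s r X (TAdd x (TAdd y z)) (TAdd (TAdd x y) z)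
  | ceq_addC x y : ceq s r X (TAdd x y) (TAdd y x)
  | ceq_add0 x : ceq s r X (TAdd T0 x) x
  | ceq_addN x : ceq s r X (TAdd x (TScale (-1) x)) T0
  | ceq_scaleDl a b x : ceq s r X (TScale (a + b) x) (TAdd (TScale a x) (TScale b x))
  | ceq_scaleDr a x y : ceq s r X (TScale a (TAdd x y)) (TAdd (TScale a x) (TScale a y))
  | ceq_scaleA a b x : ceq s r X (TScale (a * b) x) (TScale a (TScale b x))
  | ceq_scale1 x : ceq s r X (TScale 1 x) x
  | ceq_mulA x y z : ceq s r X (TMul x (TMul y z)) (TMul (TMul x y) z)
  | ceq_mulDl x y z : ceq s r X (TMul (TAdd x y) z) (TAdd (TMul x z) (TMul y z))
  | ceq_mulDr x y z : ceq s r X (TMul x (TAdd y z)) (TAdd (TMul x y) (TMul x z))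
  | ceq_scalel a x y : ceq s r X (TMul (TScale a x) y) (TScale a (TMul x y))
  | ceq_scaler a x y : ceq s r X (TMul x (TScale a y)) (TScale a (TMul x y))
  | rel_vv v : ceq s r X (TMul (TV v) (TV v)) (TV v)
  | rel_vw v w : v <> w -> ceq s r X (TMul (TV v) (TV w)) T0
  | rel_se e : ceq s r X (TMul (TV (s e)) (TE e)) (TE e)
  | rel_er e : ceq s r X (TMul (TE e) (TV (r e))) (TE e)
  | rel_rs e : ceq s r X (TMul (TV (r e)) (TS e)) (TS e)
  | rel_ss e : ceq s r X (TMul (TS e) (TV (s e))) (TS e)
  | rel_ee e : ceq s r X (TMul (TS e) (TE e)) (TV (r e))
  | rel_ef e f : e <> f -> ceq s r X (TMul (TS e) (TE f)) T0
  | rel_CK v (l : list Ed) : X v -> List.NoDup l -> (forall f, List.In f l <-> s f = v) ->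
      ceq s r X (TV v) (sumT [seq TMul (TE f) (TS f) | f <- l]).

(* c = e 1 ... e n (edges indexed 1..n) is a cycle based at w. *)
Definition is_cycle (V Ed : Type) (s r : Ed -> V) (w : V) (n : nat) (e : nat -> Ed) : Prop :=
  (1 <= n)%N /\ s (e 1%N) = w /\
  (forall i, (1 <= i)%N -> (i < n)%N -> r (e i) = s (e i.+1)) /\
  r (e n) = s (e 1%N) /\
  (forall i j, (1 <= i <= n)%N -> (1 <= j <= n)%N -> s (e i) = s (e j) -> i = j).

Definition no_exit (V Ed : Type) (s : Ed -> V) (n : nat) (e : nat -> Ed) : Prop :=
  forall f i, (1 <= i <= n)%N -> s f = s (e i) -> f = e i.

Section Paths.
Variables (K V Ed : Type) (w : V) (e : nat -> Ed).

Fixpoint pathT (k : nat) : term K V Ed :=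
  match k with
  | 0 => TV w
  | 1 => TE (e 1%N)
  | k'.+1 => TMul (pathT k') (TE (e k))
  end.

Fixpoint ghostT (k : nat) : term K V Ed :=
  match k with
  | 0 => TV w
  | 1 => TS (e 1%N)
  | k'.+1 => TMul (TS (e k)) (ghostT k')
  end.

Definition mu (k : nat) : term K V Ed := pathT k.
Definition mustar (k : nat) : term K V Ed := ghostT k.

Fixpoint cpow (n i : nat) : term K V Ed :=
  match i with
  | 0 => TV w
  | 1 => pathT n
  | i'.+1 => TMul (cpow n i') (pathT n)
  end.

Fixpoint cstarpow (n j : nat) : term K V Ed :=
  match j with
  | 0 => TV w
  | 1 => ghostT n
  | j'.+1 => TMul (ghostT n) (cstarpow n j')
  end.

Definition basisT (n i j k : nat) : term K V Ed :=
  TMul (TMul (TMul (cpow n i) (mu k)) (mustar k)) (cstarpow n j).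

Definition combT (n t1 t2 : nat) (l : nat -> nat -> nat -> K) : term K V Ed :=
  sumT (flatten [seq flatten [seq [seq TScale (l i j k) (basisT n i j k) | k <- iota 0 n]
                             | j <- iota 0 t2.+1]
                | i <- iota 0 t1.+1]).
End Paths.

(* Main.v *)
Require Import Defs.
From HB Require Import structures.
From mathcomp Require Import all_boot all_order all_algebra.
From Stdlib Require List.
From Stdlib Require Import Setoid Morphisms Classical.
Set Implicit Arguments. Unset Strict Implicit. Unset Printing Implicit Defensive.
Import GRing.Theory.
Local Open Scope ring_scope.

Section Basics.
Context (K : fieldType) (V Ed : Type) (s r : Ed -> V) (X : V -> Prop).
Local Notation T := (term K V Ed).
Local Notation CE := (@ceq K V Ed s r X).

#[local] Instance ceq_Equiv : Equivalence CE.
Proof. split; [exact: ceq_refl | exact: ceq_sym | exact: ceq_trans]. Qed.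
#[local] Instance TMul_Proper : Proper (CE ==> CE ==> CE) (@TMul K V Ed).
Proof. by move=> ??????; apply: ceq_mul. Qed.
#[local] Instance TAdd_Proper : Proper (CE ==> CE ==> CE) (@TAdd K V Ed).
Proof. by move=> ??????; apply: ceq_add. Qed.
#[local] Instance TScale_Proper a : Proper (CE ==> CE) (@TScale K V Ed a).
Proof. by move=> ???; apply: ceq_scale. Qed.

Lemma addC' (x y : T) : CE (TAdd x y) (TAdd y x). Proof. exact: ceq_addC. Qed.
Lemma addA' (x y z : T) : CE (TAdd x (TAdd y z)) (TAdd (TAdd x y) z). Proof. exact: ceq_addA. Qed.
Lemma add0' (x : T) : CE (TAdd T0 x) x. Proof. exact: ceq_add0. Qed.
Lemma addN' (x : T) : CE (TAdd x (TScale (-1) x)) T0. Proof. exact: ceq_addN. Qed.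
Lemma scaleDl' a b (x : T) : CE (TScale (a + b) x) (TAdd (TScale a x) (TScale b x)). Proof. exact: ceq_scaleDl. Qed.
Lemma scaleDr' a (x y : T) : CE (TScale a (TAdd x y)) (TAdd (TScale a x) (TScale a y)). Proof. exact: ceq_scaleDr. Qed.
Lemma scaleA' a b (x : T) : CE (TScale (a * b) x) (TScale a (TScale b x)). Proof. exact: ceq_scaleA. Qed.
Lemma scale1' (x : T) : CE (TScale 1 x) x. Proof. exact: ceq_scale1. Qed.
Lemma mulA' (x y z : T) : CE (TMul x (TMul y z)) (TMul (TMul x y) z). Proof. exact: ceq_mulA. Qed.
Lemma mulDl' (x y z : T) : CE (TMul (TAdd x y) z) (TAdd (TMul x z) (TMul y z)). Proof. exact: ceq_mulDl. Qed.
Lemma mulDr' (x y z : T) : CE (TMul x (TAdd y z)) (TAdd (TMul x y) (TMul x z)). Proof. exact: ceq_mulDr. Qed.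
Lemma scalel' a (x y : T) : CE (TMul (TScale a x) y) (TScale a (TMul x y)). Proof. exact: ceq_scalel. Qed.
Lemma scaler' a (x y : T) : CE (TMul x (TScale a y)) (TScale a (TMul x y)). Proof. exact: ceq_scaler. Qed.
Lemma vv' v : CE (TMul (TV v) (TV v)) (TV v). Proof. exact: rel_vv. Qed.
Lemma vw' v w : v <> w -> CE (TMul (TV v) (TV w)) T0. Proof. exact: rel_vw. Qed.
Lemma se' f : CE (TMul (TV (s f)) (TE f)) (TE f). Proof. exact: rel_se. Qed.
Lemma er' f : CE (TMul (TE f) (TV (r f))) (TE f). Proof. exact: rel_er. Qed.
Lemma rs' f : CE (TMul (TV (r f)) (TS f)) (TS f). Proof. exact: rel_rs. Qed.
Lemma ss' f : CE (TMul (TS f) (TV (s f))) (TS f). Proof. exact: rel_ss. Qed.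
Lemma ee' f : CE (TMul (TS f) (TE f)) (TV (r f)). Proof. exact: rel_ee. Qed.
Lemma ef' f g : f <> g -> CE (TMul (TS f) (TE g)) T0. Proof. exact: rel_ef. Qed.

Lemma addx0 (x : T) : CE (TAdd x T0) x.
Proof. rewrite addC' add0'. reflexivity. Qed.

Lemma cancel0 (x : T) : CE (TAdd x x) x -> CE x T0.
Proof.
move=> H. transitivity (TAdd (TAdd x x) (TScale (-1) x)).
  rewrite -addA' addN' addx0. reflexivity.
rewrite H addN'. reflexivity.
Qed.

Lemma mul0l (x : T) : CE (TMul T0 x) T0.
Proof. apply: cancel0. rewrite -mulDl' add0'. reflexivity. Qed.
Lemma mul0r (x : T) : CE (TMul x T0) T0.
Proof. apply: cancel0. rewrite -mulDr' add0'. reflexivity. Qed.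
Lemma scalex0 a : CE (TScale a (T0 : T)) T0.
Proof. apply: cancel0. rewrite -scaleDr' add0'. reflexivity. Qed.
Lemma scale0x (x : T) : CE (TScale 0 x) T0.
Proof. apply: cancel0. rewrite -scaleDl' addr0. reflexivity. Qed.

Lemma addACA' (a b c d : T) : CE (TAdd (TAdd a b) (TAdd c d)) (TAdd (TAdd a c) (TAdd b d)).
Proof.
rewrite -addA' (addA' b) (addC' b c) -(addA' c) addA'. reflexivity.
Qed.

Lemma sumT_cat (a b : seq T) : CE (sumT (a ++ b)) (TAdd (sumT a) (sumT b)).
Proof.
elim: a => [|x a IH] /=; first by rewrite add0'; reflexivity.
rewrite IH addA'. reflexivity.
Qed.

Lemma sumT_flatten (L : seq (seq T)) : CE (sumT (flatten L)) (sumT (map (@sumT K V Ed) L)).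
Proof.
elim: L => [|a L IH] /=; first reflexivity.
rewrite sumT_cat IH. reflexivity.
Qed.

Lemma sumT_ext (A : eqType) (f g : A -> T) xs :
  (forall x, x \in xs -> CE (f x) (g x)) -> CE (sumT (map f xs)) (sumT (map g xs)).
Proof.
elim: xs => [|a xs IH] H /=; first reflexivity.
rewrite H ?mem_head // IH; first reflexivity.
move=> x Hx; apply: H; by rewrite in_cons Hx orbT.
Qed.

Lemma sumT_add (A : Type) (f g : A -> T) xs :
  CE (TAdd (sumT (map f xs)) (sumT (map g xs))) (sumT (map (fun x => TAdd (f x) (g x)) xs)).
Proof.
elim: xs => [|a xs IH] /=; first by rewrite add0'; reflexivity.
rewrite addACA' IH. reflexivity.
Qed.

Lemma sumT_scale (A : Type) c (f : A -> T) xs :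
  CE (TScale c (sumT (map f xs))) (sumT (map (fun x => TScale c (f x)) xs)).
Proof.
elim: xs => [|a xs IH] /=; first by rewrite scalex0; reflexivity.
rewrite scaleDr' IH. reflexivity.
Qed.

Lemma sumT_zero (A : eqType) (f : A -> T) xs :
  (forall x, x \in xs -> CE (f x) T0) -> CE (sumT (map f xs)) T0.
Proof.
move=> H. transitivity (sumT (map (fun _ => (T0 : T)) xs)); first exact: sumT_ext.
elim: xs {H} => [|a xs IH] /=; first reflexivity.
rewrite IH add0'. reflexivity.
Qed.

Lemma sumT_single (A : eqType) (f : A -> T) xs x0 :
  uniq xs -> x0 \in xs -> (forall x, x \in xs -> x != x0 -> CE (f x) T0) ->
  CE (sumT (map f xs)) (f x0).
Proof.
elim: xs => [//|a xs IH] /= /andP[Ha Hu] Hx H.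
rewrite in_cons in Hx. case/orP: Hx => [/eqP Ex|Hx].
- subst a. rewrite sumT_zero ?addx0; first reflexivity.
  move=> x Hx; apply: H; first by rewrite in_cons Hx orbT.
  by apply: contraNneq Ha => <-.
- rewrite H ?mem_head ?add0' ?IH //; first reflexivity.
  + move=> x Hx'; apply: H; by rewrite in_cons Hx' orbT.
  + by apply: contraNneq Ha => ->.
Qed.

Lemma vdiff_mul (v : V) (x : T) u : v <> u -> CE (TMul (TV v) (TMul (TV u) x)) T0.
Proof. move=> H. rewrite mulA' vw' // mul0l. reflexivity. Qed.

Inductive span (P : T -> Prop) : T -> Prop :=
  | sp_gen x : P x -> span P x
  | sp_0 : span P T0
  | sp_add x y : span P x -> span P y -> span P (TAdd x y)
  | sp_scale a x : span P x -> span P (TScale a x)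
  | sp_eq x y : CE x y -> span P x -> span P y.

Lemma span_mono (P Q : T -> Prop) x : (forall y, P y -> span Q y) -> span P x -> span Q x.
Proof.
move=> H; elim=> {x}.
- move=> x Px; exact: H.
- exact: sp_0.
- move=> x y _ Hx _ Hy; exact: sp_add.
- move=> a x _ Hx; exact: sp_scale.
- move=> x y Hxy _ Hx; exact: sp_eq Hxy Hx.
Qed.

Lemma span_sumT (P : T -> Prop) (A : Type) (f : A -> T) xs :
  (forall x, span P (f x)) -> span P (sumT (map f xs)).
Proof.
move=> H; elim: xs => [|a xs IH] /=; first exact: sp_0. exact: sp_add.
Qed.

Fixpoint Pth (al : list Ed) (u : V) : T :=
  match al with [::] => TV u | f :: al' => TMul (TE f) (Pth al' u) end.
Definition FS (t : T) (g : Ed) : T := TMul t (TS g).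
Definition mon al u ga := foldl FS (Pth al u) ga.
Definition isMon (t : T) := exists al u ga, t = mon al u ga.

Lemma foldl_cong (b b' : T) ga : CE b b' -> CE (foldl FS b ga) (foldl FS b' ga).
Proof.
elim: ga b b' => [|g ga IH] b b' H //=. apply: IH. rewrite /FS H. reflexivity.
Qed.

#[local] Instance foldl_Proper : Proper (CE ==> eq ==> CE) (foldl FS).
Proof. by move=> ??? ?? ->; apply: foldl_cong. Qed.

Lemma foldl_mul (a b : T) ga : CE (TMul a (foldl FS b ga)) (foldl FS (TMul a b) ga).
Proof.
elim: ga b => [|g ga IH] b /=; first reflexivity.
rewrite IH /FS. apply: foldl_cong. rewrite mulA'. reflexivity.
Qed.

Lemma foldl_0 ga : CE (foldl FS T0 ga) T0.
Proof.
elim: ga => [|g ga IH] /=; first reflexivity.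
transitivity (foldl FS T0 ga); last exact: IH.
apply: foldl_cong. rewrite /FS mul0l. reflexivity.
Qed.

Lemma sp_eqr (P : T -> Prop) x y : CE y x -> span P x -> span P y.
Proof. move=> H; apply: sp_eq; symmetry; exact: H. Qed.

Lemma span0 (P : T -> Prop) y : CE y T0 -> span P y.
Proof. move=> H; apply: (sp_eqr H); exact: sp_0. Qed.

Lemma mon_vertex v al u ga : span isMon (TMul (TV v) (mon al u ga)).
Proof.
rewrite /mon. apply: sp_eqr; first by apply: foldl_mul.
case: al => [|f al] /=.
- have [->|Hne] := classic (v = u).
  + apply: sp_eqr; first by rewrite vv'; reflexivity.
    apply: sp_gen. by exists [::], u, ga.
  + apply: span0. rewrite vw' // foldl_0. reflexivity.
- have [<-|Hne] := classic (s f = v).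
  + apply: sp_eqr; first by rewrite mulA' se'; reflexivity.
    apply: sp_gen. by exists (f :: al), u, ga.
  + apply: span0. rewrite -se' !mulA' vw'; last by auto.
    rewrite !mul0l foldl_0. reflexivity.
Qed.

Lemma mon_ghost g al u ga : span isMon (TMul (TS g) (mon al u ga)).
Proof.
rewrite /mon. apply: sp_eqr; first by apply: foldl_mul.
case: al => [|f al] /=.
- have [<-|Hne] := classic (s g = u).
  + apply: sp_eqr; first by rewrite ss' -rs'; reflexivity.
    apply: sp_gen. by exists [::], (r g), (g :: ga).
  + apply: span0. rewrite -ss' -mulA' vw' // mul0r foldl_0. reflexivity.
- have [<-|Hne] := classic (g = f).
  + apply: sp_eqr; first by rewrite mulA' ee' -foldl_mul; reflexivity.
    exact: mon_vertex.
  + apply: span0. rewrite mulA' ef' // mul0l foldl_0. reflexivity.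
Qed.

Lemma span_all (x : T) : span isMon x.
Proof.
have Hl : forall y z, span isMon z -> span isMon (TMul y z).
  elim=> [v|g|g||y1 IH1 y2 IH2|y1 IH1 y2 IH2|a y IH] z Hz.
  - elim: Hz => {z} [z [al [u [ga ->]]]| |z1 z2 _ H1 _ H2|a z _ H|z1 z2 E _ H].
    + exact: mon_vertex.
    + apply: span0; rewrite mul0r; reflexivity.
    + apply: sp_eqr; first by apply: mulDr'. exact: sp_add.
    + apply: sp_eqr; first by apply: scaler'. exact: sp_scale.
    + apply: sp_eq H. rewrite E; reflexivity.
  - elim: Hz => {z} [z [al [u [ga ->]]]| |z1 z2 _ H1 _ H2|a z _ H|z1 z2 E _ H].
    + apply: sp_eqr; first by apply: foldl_mul.
      apply: sp_gen. by exists (g :: al), u, ga.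
    + apply: span0; rewrite mul0r; reflexivity.
    + apply: sp_eqr; first by apply: mulDr'. exact: sp_add.
    + apply: sp_eqr; first by apply: scaler'. exact: sp_scale.
    + apply: sp_eq H. rewrite E; reflexivity.
  - elim: Hz => {z} [z [al [u [ga ->]]]| |z1 z2 _ H1 _ H2|a z _ H|z1 z2 E _ H].
    + exact: mon_ghost.
    + apply: span0; rewrite mul0r; reflexivity.
    + apply: sp_eqr; first by apply: mulDr'. exact: sp_add.
    + apply: sp_eqr; first by apply: scaler'. exact: sp_scale.
    + apply: sp_eq H. rewrite E; reflexivity.
  - apply: span0; rewrite mul0l; reflexivity.
  - apply: sp_eqr; first by apply: mulDl'. apply: sp_add; [exact: IH1 | exact: IH2].
  - apply: sp_eqr; first by symmetry; apply: mulA'. apply: IH1. exact: IH2.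
  - apply: sp_eqr; first by apply: scalel'. apply: sp_scale; exact: IH.
elim: x => [v|g|g||y1 IH1 y2 IH2|y1 IH1 y2 IH2|a y IH].
- apply: sp_gen. by exists [::], v, [::].
- apply: sp_eqr; first by symmetry; apply: er'. apply: sp_gen. by exists [:: g], (r g), [::].
- apply: sp_eqr; first by symmetry; apply: rs'. apply: sp_gen. by exists [::], (r g), [:: g].
- exact: sp_0.
- exact: sp_add.
- exact: Hl.
- exact: sp_scale.
Qed.

Context (w : V) (n : nat) (e : nat -> Ed)
  (Hc : is_cycle s r w n e) (Hne : no_exit s n e).

Local Notation PT k := (pathT K w e k).
Local Notation GT k := (ghostT K w e k).
Local Notation CP q := (cpow K w e n q).
Local Notation CS q := (cstarpow K w e n q).
Definition vk k := s (e k.+1).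

Lemma n_pos : (0 < n)%N. Proof. by case: Hc. Qed.
Lemma s1w : s (e 1%N) = w. Proof. by case: Hc => _ []. Qed.
Lemma rnw : r (e n) = w. Proof. case: Hc => _ [H1 [_ [-> _]]]; exact: H1. Qed.
Lemma r_vk k : (1 <= k)%N -> (k < n)%N -> r (e k) = vk k.
Proof. case: Hc => _ [_ [H _]] H1 H2; exact: H. Qed.
Lemma vk_inj k1 k2 : (k1 < n)%N -> (k2 < n)%N -> vk k1 = vk k2 -> k1 = k2.
Proof.
case: Hc => _ [_ [_ [_ H]]] H1 H2 E.
have := H k1.+1 k2.+1; rewrite !ltnS /= H1 H2 => /(_ isT isT E); by case.
Qed.
Lemma noex f k : (k < n)%N -> s f = vk k -> f = e k.+1.
Proof. move=> Hk Hs; apply: Hne => //. Qed.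

Lemma pathS k : CE (TMul (PT k) (TE (e k.+1))) (PT k.+1).
Proof. case: k => [|k] /=; last reflexivity. rewrite -s1w se'. reflexivity. Qed.
Lemma ghostS k : CE (TMul (TS (e k.+1)) (GT k)) (GT k.+1).
Proof. case: k => [|k] /=; last reflexivity. rewrite -s1w ss'. reflexivity. Qed.
Lemma wpath k : CE (TMul (TV w) (PT k)) (PT k).
Proof.
elim: k => [|k IH]; first exact: vv'.
rewrite -pathS mulA' IH. reflexivity.
Qed.
Lemma ghostw k : CE (TMul (GT k) (TV w)) (GT k).
Proof.
elim: k => [|k IH]; first exact: vv'.
rewrite -ghostS -mulA' IH. reflexivity.
Qed.
Lemma cpowS q : CE (TMul (CP q) (PT n)) (CP q.+1).
Proof. case: q => [|q] /=; last reflexivity. exact: wpath. Qed.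
Lemma cstarS q : CE (TMul (GT n) (CS q)) (CS q.+1).
Proof. case: q => [|q] /=; last reflexivity. exact: ghostw. Qed.
Lemma path_end k : (1 <= k)%N -> CE (TMul (PT k) (TV (r (e k)))) (PT k).
Proof.
case: k => [//|k] _. rewrite -pathS -mulA' er'. reflexivity.
Qed.
Lemma ghost_beg k : (1 <= k)%N -> CE (TMul (TV (r (e k))) (GT k)) (GT k).
Proof.
case: k => [//|k] _. rewrite -ghostS mulA' rs'. reflexivity.
Qed.
Lemma cpow_end q : CE (TMul (CP q) (TV w)) (CP q).
Proof.
case: q => [|q]; first exact: vv'.
have Ew : TV w = TV (r (e n)) :> T by rewrite rnw.
rewrite -cpowS -mulA' Ew path_end ?n_pos //. reflexivity.
Qed.
Lemma cstar_beg q : CE (TMul (TV w) (CS q)) (CS q).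
Proof.
case: q => [|q]; first exact: vv'.
have Ew : TV w = TV (r (e n)) :> T by rewrite rnw.
rewrite -cstarS mulA' Ew ghost_beg ?n_pos //. reflexivity.
Qed.
Lemma mu_end k : (k < n)%N -> CE (TMul (PT k) (TV (vk k))) (PT k).
Proof.
case: k => [|k] Hk; first by rewrite /vk s1w; exact: vv'.
rewrite -r_vk // path_end //. reflexivity.
Qed.
Lemma mustar_beg k : (k < n)%N -> CE (TMul (TV (vk k)) (GT k)) (GT k).
Proof.
case: k => [|k] Hk; first by rewrite /vk s1w; exact: vv'.
rewrite -r_vk // ghost_beg //. reflexivity.
Qed.

Definition Wm q k := TMul (CP q) (PT k).
Definition Hm q k := TMul (GT k) (CS q).

Lemma W_end q k : (k < n)%N -> CE (TMul (Wm q k) (TV (vk k))) (Wm q k).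
Proof. move=> Hk; rewrite /Wm -mulA' mu_end //. reflexivity. Qed.
Lemma H_beg q k : (k < n)%N -> CE (TMul (TV (vk k)) (Hm q k)) (Hm q k).
Proof. move=> Hk; rewrite /Hm mulA' mustar_beg //. reflexivity. Qed.
Lemma W_step q k : (k < n)%N -> exists q' k', (k' < n)%N /\
  CE (TMul (Wm q k) (TE (e k.+1))) (Wm q' k').
Proof.
move=> Hk. have E : CE (TMul (Wm q k) (TE (e k.+1))) (TMul (CP q) (PT k.+1)).
  rewrite /Wm -mulA' pathS. reflexivity.
case: (ltnP k.+1 n) => H1.
- exists q, k.+1; split => //.
- have {}H1 : k.+1 = n by apply/eqP; rewrite eqn_leq Hk H1.
  exists q.+1, 0%N; split; first exact: n_pos.
  rewrite E H1 cpowS /Wm (_ : PT 0 = TV w) // cpow_end. reflexivity.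
Qed.
Lemma H_step q k : (k < n)%N -> exists q' k', (k' < n)%N /\
  CE (TMul (TS (e k.+1)) (Hm q k)) (Hm q' k').
Proof.
move=> Hk. have E : CE (TMul (TS (e k.+1)) (Hm q k)) (TMul (GT k.+1) (CS q)).
  rewrite /Hm mulA' ghostS. reflexivity.
case: (ltnP k.+1 n) => H1.
- exists q, k.+1; split => //.
- have {}H1 : k.+1 = n by apply/eqP; rewrite eqn_leq Hk H1.
  exists q.+1, 0%N; split; first exact: n_pos.
  rewrite E H1 cstarS /Hm (_ : GT 0 = TV w) // cstar_beg. reflexivity.
Qed.

Lemma left_walk al u : forall q k, (k < n)%N ->
  CE (TMul (Wm q k) (Pth al u)) T0 \/
  exists q' k', (k' < n)%N /\ CE (TMul (Wm q k) (Pth al u)) (Wm q' k').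
Proof.
elim: al => [|f al IH] q k Hk /=.
- have [<-|Hu] := classic (vk k = u).
  + right; exists q, k; split => //. exact: W_end.
  + left. rewrite -W_end // -mulA' vw' // mul0r. reflexivity.
- have [Ef|Ef] := classic (f = e k.+1).
  + subst f. have [q' [k' [Hk' E]]] := W_step q Hk.
    have [H|[q'' [k'' [Hk'' H]]]] := IH q' k' Hk'.
    * left. rewrite mulA' E H. reflexivity.
    * right. exists q'', k''; split => //. rewrite mulA' E H. reflexivity.
  + left. have Z : CE (TMul (TV (vk k)) (TE f)) T0.
      rewrite -se' mulA' vw'; first by rewrite mul0l; reflexivity.
      move=> E; apply: Ef; apply: noex => //.
    rewrite -W_end // -mulA' (mulA' (TV (vk k))) Z mul0l mul0r. reflexivity.
Qed.

Lemma right_walk (b : T) ga : forall q k, (k < n)%N ->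
  CE (TMul (foldl FS b ga) (Hm q k)) T0 \/
  exists q' k', (k' < n)%N /\ CE (TMul (foldl FS b ga) (Hm q k)) (TMul b (Hm q' k')).
Proof.
elim/last_ind: ga => [|ga g IH] q k Hk /=.
- right; exists q, k; split => //; reflexivity.
- rewrite foldl_rcons /FS.
  have [Ef|Ef] := classic (g = e k.+1).
  + subst g. have [q' [k' [Hk' E]]] := H_step q Hk.
    have [H|[q'' [k'' [Hk'' H]]]] := IH q' k' Hk'.
    * left. rewrite -mulA' E H. reflexivity.
    * right. exists q'', k''; split => //. rewrite -mulA' E H. reflexivity.
  + left. have Z : CE (TMul (TS g) (TV (vk k))) T0.
      rewrite -ss' -mulA' vw'; first by rewrite mul0r; reflexivity.
      move=> E; apply: Ef; apply: noex => //.
    rewrite -H_beg // mulA' -(mulA' _ (TS g)) Z mul0r mul0l. reflexivity.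
Qed.

Local Notation BT i j k := (basisT K w e n i j k).

Lemma WH q1 k1 q2 k2 : (k1 < n)%N -> (k2 < n)%N ->
  CE (TMul (Wm q1 k1) (Hm q2 k2)) T0 \/ (k1 = k2 /\ CE (TMul (Wm q1 k1) (Hm q2 k2)) (BT q1 q2 k1)).
Proof.
move=> H1 H2. have [<-|Hk] := classic (k1 = k2).
- right; split => //. rewrite /Wm /Hm /basisT /mu /mustar mulA'. reflexivity.
- left. rewrite -W_end // -H_beg // -mulA' (mulA' (TV _)) vw'.
    rewrite mul0l mul0r. reflexivity.
  by move/vk_inj => /(_ H1 H2).
Qed.

Lemma mon_w al u ga : CE (TMul (TMul (TV w) (mon al u ga)) (TV w)) T0 \/
  exists q1 q2 k, (k < n)%N /\ CE (TMul (TMul (TV w) (mon al u ga)) (TV w)) (BT q1 q2 k).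
Proof.
have E1 : CE (TMul (TMul (TV w) (mon al u ga)) (TV w))
   (TMul (foldl FS (TMul (Wm 0%N 0%N) (Pth al u)) ga) (Hm 0%N 0%N)).
  rewrite /mon foldl_mul. apply: ceq_mul; last by symmetry; apply: vv'.
  apply: foldl_cong. apply: ceq_mul; last reflexivity. symmetry; apply: vv'.
have [H|[q [k [Hk H]]]] := @left_walk al u 0%N 0%N n_pos.
- left. rewrite E1 H foldl_0 mul0l. reflexivity.
- have E2 : CE (TMul (TMul (TV w) (mon al u ga)) (TV w)) (TMul (foldl FS (Wm q k) ga) (Hm 0%N 0%N)).
    rewrite E1 H. reflexivity.
  have [H'|[q' [k' [Hk' H']]]] := @right_walk (Wm q k) ga 0%N 0%N n_pos.
  + left. rewrite E2 H'. reflexivity.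
  + have [H''|[Ek H'']] := @WH q k q' k' Hk Hk'.
    * left. rewrite E2 H' H''. reflexivity.
    * right. exists q, q', k; split => //. rewrite E2 H' H''. reflexivity.
Qed.

Definition Bn (t : T) := exists i j k, (k < n)%N /\ t = BT i j k.

Lemma span_w (x : T) : span Bn (TMul (TMul (TV w) x) (TV w)).
Proof.
elim: (span_all x) => {x} [x [al [u [ga ->]]]| |x y _ Hx _ Hy|a x _ Hx|x y E _ Hx].
- have [H|[q1 [q2 [k [Hk H]]]]] := mon_w al u ga.
  + exact: span0.
  + apply: (sp_eqr H). apply: sp_gen. by exists q1, q2, k.
- apply: span0. rewrite mul0r mul0l. reflexivity.
- apply: sp_eqr; last exact: sp_add Hx Hy. rewrite mulDr' mulDl'. reflexivity.
- apply: sp_eqr; last exact: sp_scale Hx. rewrite scaler' scalel'. reflexivity.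
- apply: sp_eq Hx. rewrite E. reflexivity.
Qed.

Definition inI k := k = 0%N \/ ((1 <= k)%N /\ (k < n)%N /\ (regular s (s (e k)) /\ ~ X (s (e k)))).
Definition BI (t : T) := exists i j k, inI k /\ t = BT i j k.

Lemma BT_red i j k : (k.+1 < n)%N -> X (s (e k.+1)) -> CE (BT i j k.+1) (BT i j k).
Proof.
move=> Hk HX.
have EE : CE (TMul (TE (e k.+1)) (TS (e k.+1))) (TV (vk k)).
  have H : CE (TV (s (e k.+1))) (sumT [seq TMul (TE f) (TS f) | f <- [:: e k.+1]]).
    apply: rel_CK => //.
  - apply: List.NoDup_cons; [by case | exact: List.NoDup_nil].
  - move=> f; split; first by case=> [<-|[]].
    move=> Hs; left; symmetry; apply: Hne => //. by rewrite /= ltnW.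
  rewrite /vk H /= addx0. reflexivity.
rewrite /basisT /mu /mustar. apply: ceq_mul; last reflexivity.
rewrite -(pathS k) -(ghostS k) (mulA' (CP i) (PT k)) -mulA' (mulA' (TE _)) EE.
rewrite mustar_beg ?(ltnW Hk) //. reflexivity.
Qed.

Lemma reduce k : (k < n)%N -> forall i j, span BI (BT i j k).
Proof.
elim: k => [|k IH] Hk i j.
- apply: sp_gen. exists i, j, 0%N; split => //; by left.
- have [HX|HX] := classic (X (s (e k.+1))).
  + apply: sp_eqr (IH (ltnW Hk) i j). exact: BT_red.
  + apply: sp_gen. exists i, j, k.+1; split => //. right; split => //; split => //; split => //.
    exists [:: e k.+1]; split; last split => //.
    * apply: List.NoDup_cons; [by case | exact: List.NoDup_nil].
    * move=> f; split; first by case=> [<-|[]].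
      move=> Hs; left; symmetry; apply: Hne => //. by rewrite /= ltnW.
Qed.

Lemma span_wI (x : T) : span BI (TMul (TMul (TV w) x) (TV w)).
Proof.
apply: span_mono (span_w x). move=> y [i [j [k [Hk ->]]]]. exact: reduce.
Qed.

Definition NS t1 t2 (l : nat -> nat -> nat -> K) : T :=
  sumT [seq sumT [seq sumT [seq TScale (l i j k) (BT i j k) | k <- iota 0 n]
                  | j <- iota 0 t2.+1] | i <- iota 0 t1.+1].

Lemma combT_NS t1 t2 l : CE (combT w e n t1 t2 l) (NS t1 t2 l).
Proof.
rewrite /combT sumT_flatten -map_comp. apply: sumT_ext => i _. rewrite /comp.
rewrite sumT_flatten -map_comp. reflexivity. Qed.

Lemma NS_add t1 t2 l l' : CE (TAdd (NS t1 t2 l) (NS t1 t2 l'))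
  (NS t1 t2 (fun i j k => l i j k + l' i j k)).
Proof.
rewrite /NS sumT_add. apply: sumT_ext => i _.
rewrite sumT_add. apply: sumT_ext => j _.
rewrite sumT_add. apply: sumT_ext => k _.
rewrite scaleDl'. reflexivity.
Qed.

Lemma NS_scale t1 t2 c l : CE (TScale c (NS t1 t2 l))
  (NS t1 t2 (fun i j k => c * l i j k)).
Proof.
rewrite /NS sumT_scale. apply: sumT_ext => i _.
rewrite sumT_scale. apply: sumT_ext => j _.
rewrite sumT_scale. apply: sumT_ext => k _.
rewrite scaleA'. reflexivity.
Qed.

Lemma NS_zero t1 t2 l : (forall i j k, l i j k = 0) -> CE (NS t1 t2 l) T0.
Proof.
move=> H. rewrite /NS. apply: sumT_zero => i _.
apply: sumT_zero => j _. apply: sumT_zero => k _.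
rewrite H scale0x. reflexivity.
Qed.

Lemma NS_ext t1 t2 l l' :
  (forall i j k, (i <= t1)%N -> (j <= t2)%N -> l i j k = l' i j k) ->
  CE (NS t1 t2 l) (NS t1 t2 l').
Proof.
move=> H. rewrite /NS. apply: sumT_ext => i; rewrite mem_iota add0n ltnS => /andP[_ Hi].
apply: sumT_ext => j; rewrite mem_iota add0n ltnS => /andP[_ Hj].
apply: sumT_ext => k _. rewrite H //. reflexivity.
Qed.

Definition trunc t1 t2 (l : nat -> nat -> nat -> K) :=
  fun i j k => if (i <= t1)%N && (j <= t2)%N then l i j k else 0.

Lemma NS_extend t1 t2 T1 T2 l : (t1 <= T1)%N -> (t2 <= T2)%N ->
  CE (NS t1 t2 l) (NS T1 T2 (trunc t1 t2 l)).
Proof.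
move=> H1 H2. rewrite /NS -(subnKC H1) -(subnKC H2) -!addSn !iotaD !map_cat.
rewrite sumT_cat. rewrite [X in TAdd _ X]sumT_zero; last first.
  move=> i; rewrite mem_iota add0n => /andP[Hi _].
  apply: sumT_zero => j _; apply: sumT_zero => k _.
  rewrite /trunc leqNgt Hi /= scale0x. reflexivity.
rewrite addx0. apply: sumT_ext => i; rewrite mem_iota add0n ltnS => /andP[_ Hi].
rewrite map_cat sumT_cat. rewrite [X in TAdd _ X]sumT_zero; last first.
  move=> j; rewrite mem_iota add0n => /andP[Hj _].
  apply: sumT_zero => k _.
  rewrite /trunc [(j <= t2)%N]leqNgt Hj andbF scale0x. reflexivity.
rewrite addx0. apply: sumT_ext => j; rewrite mem_iota add0n ltnS => /andP[_ Hj].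
apply: sumT_ext => k _. rewrite /trunc Hi Hj. reflexivity.
Qed.

Definition delta i0 j0 k0 : nat -> nat -> nat -> K :=
  fun i j k => if (i == i0) && (j == j0) && (k == k0) then 1 else 0.

Lemma NS_delta i0 j0 k0 : (k0 < n)%N -> CE (NS i0 j0 (delta i0 j0 k0)) (BT i0 j0 k0).
Proof.
move=> Hk. rewrite /NS.
rewrite (@sumT_single _ _ _ i0) ?iota_uniq ?mem_iota ?add0n ?ltnS ?leqnn //; last first.
  move=> i _ Hi. apply: sumT_zero => j _; apply: sumT_zero => k _.
  rewrite /delta (negbTE Hi) scale0x. reflexivity.
rewrite (@sumT_single _ _ _ j0) ?iota_uniq ?mem_iota ?add0n ?ltnS ?leqnn //; last first.
  move=> j _ Hj. apply: sumT_zero => k _.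
  rewrite /delta eqxx (negbTE Hj) scale0x. reflexivity.
rewrite (@sumT_single _ _ _ k0) ?iota_uniq ?mem_iota ?add0n //; last first.
  move=> k _ Hk'. rewrite /delta !eqxx (negbTE Hk') scale0x. reflexivity.
rewrite /delta !eqxx scale1'. reflexivity.
Qed.

Lemma inI_lt k : inI k -> (k < n)%N.
Proof. case=> [->|[_ [H _]]] //; exact: n_pos. Qed.

Lemma span_to_NS y : span BI y -> exists t1 t2 l,
  (forall i j k, ~ inI k -> l i j k = 0) /\ CE y (NS t1 t2 l).
Proof.
elim=> {y} [y [i [j [k [Hk ->]]]]| |x y _ [t1 [t2 [l [Hl Hx]]]] _ [t1' [t2' [l' [Hl' Hy]]]]
           |a x _ [t1 [t2 [l [Hl Hx]]]]|x y E _ [t1 [t2 [l [Hl Hx]]]]].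
- exists i, j, (delta i j k); split.
  + move=> i' j' k' Hk'. rewrite /delta. case: eqP => // E1; case: eqP => // E2.
    case: eqP => // E3. by subst k'.
  + symmetry; apply: NS_delta; exact: inI_lt.
- exists 0%N, 0%N, (fun _ _ _ => 0); split => //. symmetry; exact: NS_zero.
- exists (maxn t1 t1'), (maxn t2 t2'),
    (fun i j k => trunc t1 t2 l i j k + trunc t1' t2' l' i j k); split.
  + move=> i j k Hk. by rewrite /trunc Hl // Hl' // !if_same addr0.
  + rewrite Hx Hy (@NS_extend t1 t2 (maxn t1 t1') (maxn t2 t2')) ?leq_maxl //.
    rewrite (@NS_extend t1' t2' (maxn t1 t1') (maxn t2 t2')) ?leq_maxr //.
    rewrite NS_add. reflexivity.
- exists t1, t2, (fun i j k => a * l i j k); split.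
  + move=> i j k Hk. by rewrite Hl // mulr0.
  + rewrite Hx NS_scale. reflexivity.
- exists t1, t2, l; split => //. rewrite -E. exact: Hx.
Qed.

Lemma cpow_beg q : CE (TMul (TV w) (CP q)) (CP q).
Proof.
elim: q => [|q IH]; first exact: vv'.
rewrite -cpowS mulA' IH. reflexivity.
Qed.
Lemma cstar_end q : CE (TMul (CS q) (TV w)) (CS q).
Proof.
elim: q => [|q IH]; first exact: vv'.
rewrite -cstarS -mulA' IH. reflexivity.
Qed.

Lemma wBTw i j k : CE (TMul (TMul (TV w) (BT i j k)) (TV w)) (BT i j k).
Proof.
rewrite /basisT.
rewrite -mulA'.
rewrite -(mulA' (TMul (TMul (CP i) (PT k)) (GT k)) (CS j)) cstar_end.
rewrite !(mulA' (TV w)) cpow_beg. reflexivity.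
Qed.

Lemma combT_w t1 t2 l : CE (TMul (TMul (TV w) (combT w e n t1 t2 l)) (TV w)) (combT w e n t1 t2 l).
Proof.
pose G (y : T) := CE (TMul (TMul (TV w) y) (TV w)) y.
have HG : forall y, span G y -> G y.
  move=> y; elim=> {y}.
  - done.
  - rewrite /G mul0r mul0l. reflexivity.
  - move=> x y' _ Hx _ Hy. rewrite /G mulDr' mulDl' Hx Hy. reflexivity.
  - move=> a x _ Hx. rewrite /G scaler' scalel' Hx. reflexivity.
  - move=> x y' E _ Hx. rewrite /G -E. exact: Hx.
apply: HG. apply: (sp_eqr (combT_NS t1 t2 l)).
apply: span_sumT => i; apply: span_sumT => j; apply: span_sumT => k.
apply: sp_scale; apply: sp_gen. exact: wBTw.
Qed.

End Basics.

Theorem mainTheorem1 (K : fieldType) (V Ed : Type) (s r : Ed -> V)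
  (X : V -> Prop) (HX : forall v, X v -> regular s v)
  (w : V) (n : nat) (e : nat -> Ed)
  (Hc : is_cycle s r w n e) (Hne : no_exit s n e) :
  let Y := fun v => regular s v /\ ~ X v in
  let inI := fun k => k = 0%N \/ ((1 <= k)%N /\ (k < n)%N /\ Y (s (e k))) in
  (forall x : term K V Ed,
     exists t1 t2 (l : nat -> nat -> nat -> K),
       (forall i j k, ~ inI k -> l i j k = 0%R) /\
       ceq s r X (TMul (TMul (TV w) x) (TV w)) (combT w e n t1 t2 l)) /\
  (forall t1 t2 (l : nat -> nat -> nat -> K),
     (forall i j k, ~ inI k -> l i j k = 0%R) ->
     exists x : term K V Ed,
       ceq s r X (TMul (TMul (TV w) x) (TV w)) (combT w e n t1 t2 l)).
Proof.
move=> Y inI0. split.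
- move=> x. have [t1 [t2 [l [Hl H]]]] := span_to_NS Hc (span_wI X Hc Hne x).
  exists t1, t2, l; split.
  + move=> i j k Hk; apply: Hl; exact: Hk.
  + apply: ceq_trans H _. apply: ceq_sym. exact: combT_NS.
- move=> t1 t2 l _. exists (combT w e n t1 t2 l). exact: combT_w.
Qed.
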